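(* For $n\ge0$, $\left|\Pi_n\wr C_2(1^11^1,1^11^2)\right| = \left|\mathcal{S}_{n+1}(12\!-\!3,\,214\!-\!3)\right|$.
   Context: For $n\ge0$ let $[n]=\{1,\dots,n\}$. A $2$-colored set partition of $[n]$ is a set partition of $[n]$ together with an assignment of a color from $\{1,2\}$ to each element; $\Pi_n\wr C_2$ is the set of these (with $\Pi_0\wr C_2$ containing only the empty partition). $\Pi_n\wr C_2(1^11^1,1^11^2)$ is the set of those colored partitions in which no two elements of the same block have the same color, and there are no $i<j$ in the same block with $i$ colored $1$ and $j$ colored $2$. $\mathcal{S}_{m}(12\!-\!3,214\!-\!3)$ is the set of permutations $q=q_1\cdots q_m$ of $[m]$ that contain no indices $a<a+1<b$ with $q_a<q_{a+1}<q_b$ (an occurrence of $12\!-\!3$) and no indices $a<a+1<a+2<b$ with $q_{a+1}<q_a<q_b<q_{a+2}$ (an occurrence of $214\!-\!3$). *)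

(* Defs.v *)
From mathcomp Require Import all_boot all_order all_fingroup.
Set Implicit Arguments. Unset Strict Implicit. Unset Printing Implicit Defensive.

(* Elements of [n] = {1,..,n} are represented by 'I_n (i : 'I_n stands for
   i+1; the order is preserved).  Colors {1,2} are represented by 'I_2:
   value 0 = color 1, value 1 = color 2. *)

Definition colored_partition (n : nat)
    (Pc : {set {set 'I_n}} * {ffun 'I_n -> 'I_2}) : bool :=
  partition Pc.1 [set: 'I_n].

(* Avoidance of 1^1 1^1 (no two elements of a block with the same color)
   and of 1^1 1^2 (no i<j in a block with i colored 1 and j colored 2). *)
Definition avoids_11_12 (n : nat)
    (Pc : {set {set 'I_n}} * {ffun 'I_n -> 'I_2}) : bool :=
  [forall B in Pc.1, forall i in B, forall j in B,
     ((i != j) ==> (Pc.2 i != Pc.2 j)) &&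
     ~~ [&& (i < j)%N, val (Pc.2 i) == 0%N & val (Pc.2 j) == 1%N]].

Definition Pi_wr_C2_avoid (n : nat) :=
  [set Pc : {set {set 'I_n}} * {ffun 'I_n -> 'I_2}
     | colored_partition Pc && avoids_11_12 Pc].

(* Permutations q of [m], positions and values shifted by one. *)
Definition contains_12_3 (m : nat) (q : {perm 'I_m}) : bool :=
  [exists a : 'I_m, exists a1 : 'I_m, exists b : 'I_m,
     [&& val a1 == (val a).+1, (val a1 < val b)%N,
         (val (q a) < val (q a1))%N & (val (q a1) < val (q b))%N]].

Definition contains_214_3 (m : nat) (q : {perm 'I_m}) : bool :=
  [exists a : 'I_m, exists a1 : 'I_m, exists a2 : 'I_m, exists b : 'I_m,
     [&& val a1 == (val a).+1, val a2 == (val a).+2, (val a2 < val b)%N,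
         (val (q a1) < val (q a))%N, (val (q a) < val (q b))%N
       & (val (q b) < val (q a2))%N]].

Definition S_avoid_12_3_214_3 (m : nat) :=
  [set q : {perm 'I_m} | ~~ contains_12_3 q && ~~ contains_214_3 q].

(* Main.v *)
Require Import Defs.
From mathcomp Require Import all_boot all_order all_fingroup.
Set Implicit Arguments. Unset Strict Implicit. Unset Printing Implicit Defensive.

Definition f123 (x : nat) (w : seq nat) : bool :=
  if w is w1 :: w' then (x < w1) && has (fun c => w1 < c) w' else false.
Definition f214 (x : nat) (w : seq nat) : bool :=
  if w is w1 :: w2 :: w'' then (w1 < x) && has (fun c => (x < c) && (c < w2)) w''
  else false.
Fixpoint c123 (t : seq nat) : bool := if t is x :: w then f123 x w || c123 w else false.
Fixpoint c214 (t : seq nat) : bool := if t is x :: w then f214 x w || c214 w else false.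
Definition validL t := ~~ c123 t && ~~ c214 t.

Lemma validL_cons x w : validL (x :: w) = [&& ~~ f123 x w, ~~ f214 x w & validL w].
Proof. rewrite /validL [c123 _]/= [c214 _]/=; by case: (f123 x w); case: (f214 x w); case: (c123 w); case: (c214 w). Qed.

Lemma L1 x w : (forall y z, y \in w -> z \in w -> x < y -> x < z -> y = z) ->
  validL (x :: w) = validL w.
Proof.
move=> H; rewrite validL_cons.
suff [-> ->] : f123 x w = false /\ f214 x w = false by [].
case: w H => [|w1 w'] H //=; split.
  apply/negbTE/negP => /andP[xw1 /hasP[c cw' w1c]].
  have := H w1 c (mem_head _ _) (@mem_behead _ (w1 :: w') _ cw') xw1 (ltn_trans xw1 w1c).
  by move=> E; rewrite E ltnn in w1c.
case: w' H => [|w2 w''] H //=.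
apply/negbTE/negP => /andP[w1x /hasP[c cw /andP[xc cw2]]].
have := H c w2; rewrite !inE cw eqxx !orbT => /(_ isT isT xc (ltn_trans xc cw2)) E.
by rewrite E ltnn in cw2.
Qed.

Lemma K t0 u : forall y z, uniq (y :: z :: u) -> validL (y :: z :: u) ->
  y <= t0 -> z <= t0 -> forall a b, a \in u -> b \in u -> a != b ->
  t0 < a -> t0 < b -> False.
Proof.
elim: u => [|h u IH] y z Un V yt zt a b //.
move=> au bu ab ta tb.
have V' : validL (z :: h :: u) by move: V; rewrite validL_cons => /and3P[].
case: (leqP h t0) => ht.
  have ha : a != h by apply: contraTneq ta => ->; rewrite -leqNgt.
  have hb : b != h by apply: contraTneq tb => ->; rewrite -leqNgt.
  apply: (IH z h _ V' zt ht a b) => //.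
  - by move: Un => /= /andP[_ ->].
  - by move: au; rewrite inE (negbTE ha).
  - by move: bu; rewrite inE (negbTE hb).
have [c [cu tc ch]] : exists c, [/\ c \in u, t0 < c & c != h].
  case: (eqVneq a h) => [Eah|nah].
    exists b; split=> //; last by rewrite -Eah eq_sym.
    by move: bu; rewrite inE -Eah eq_sym (negbTE ab).
  by exists a; split=> //; move: au; rewrite inE (negbTE nah).
case: (ltngtP h c) => hc.
- move: V'; rewrite validL_cons /= => /andP[/negP []].
  by rewrite (leq_ltn_trans zt ht); apply/hasP; exists c.
- move: V; rewrite validL_cons /= => /andP[F1 /andP[F2 _]].
  have yz : y != z by move: Un => /= /andP[]; rewrite inE negb_or => /andP[].
  case: (ltngtP y z) => yz'.
  + by move/negP: F1; apply; rewrite yz' /=; apply/orP; left; rewrite (leq_ltn_trans zt ht).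
  + move/negP: F2; apply; rewrite yz' /=; apply/hasP; exists c => //.
    by rewrite hc (leq_ltn_trans yt tc).
  + by rewrite yz' eqxx in yz.
- by rewrite hc eqxx in ch.
Qed.

Lemma nf123_max M t : (forall z, z \in t -> z <= M) -> ~~ f123 M t.
Proof. by case: t => [|w1 t'] //= bt; rewrite negb_and -leqNgt bt ?mem_head. Qed.
Lemma nf214_max M t : (forall z, z \in t -> z <= M) -> ~~ f214 M t.
Proof.
case: t => [|w1 [|w2 t'']] //= bt.
rewrite negb_and; apply/orP; right; apply/hasPn => c ct.
by rewrite negb_and -leqNgt bt // !inE ct !orbT.
Qed.
Lemma nf214_lt x M t : x < M -> ~~ f214 x (M :: t).
Proof. by case: t => [|w2 t'] //= xM; rewrite negb_and -leqNgt ltnW. Qed.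

Lemma L2 x y t M M2 : uniq (x :: y :: t) -> M \in y :: t -> M2 \in y :: t ->
  x < M2 -> M2 < M -> (forall z, z \in y :: t -> z <= M) ->
  validL (x :: y :: t) = (y == M) && validL t.
Proof.
move=> Un HM HM2 xM2 M2M bnd.
have xM : x < M := ltn_trans xM2 M2M.
have bt : forall z, z \in t -> z <= M by move=> z zt; apply: bnd; rewrite inE zt orbT.
case: (eqVneq y M) => [E|yM] /=.
  subst y.
  have h1 : ~~ f123 x (M :: t).
    by rewrite /= negb_and; apply/orP; right; apply/hasPn => c /bt; rewrite -leqNgt.
  have h2 := nf214_lt t xM.
  have h3 := nf123_max bt.
  have h4 := nf214_max bt.
  by rewrite validL_cons (validL_cons M t) h1 h2 h3 h4.
apply/negbTE/negP => V.
have Mt : M \in t by move: HM; rewrite inE eq_sym (negbTE yM).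
have xy : x != y by move: Un => /= /andP[]; rewrite inE negb_or => /andP[].
case: (ltngtP x y) => xy'.
- move: V; rewrite validL_cons => /andP[/negP H _]; apply: H => /=.
  rewrite xy' /=; apply/hasP; exists M => //.
  by rewrite ltn_neqAle yM bnd ?mem_head.
- have M2y : M2 != y by apply: contraTneq xM2 => ->; rewrite -leqNgt ltnW.
  have M2t : M2 \in t by move: HM2; rewrite inE (negbTE M2y).
  apply: (K Un V (leqnn x) (ltnW xy') Mt M2t _ xM xM2).
  by rewrite eq_sym neq_ltn M2M.
- by rewrite xy' eqxx in xy.
Qed.
Lemma count_ap (P : pred (seq nat)) (s : seq nat) (g : nat -> seq (seq nat)) :
  count P [seq x :: t | x <- s, t <- g x] = \sum_(x <- s) count (fun t => P (x :: t)) (g x).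
Proof.
elim: s => [|x s IH]; first by rewrite big_nil.
by rewrite big_cons -IH /= count_cat count_map.
Qed.
Lemma exmax (s : seq nat) : s != [::] -> exists2 M, M \in s & forall z, z \in s -> z <= M.
Proof.
elim: s => [|a s IH] // _.
case: (eqVneq s [::]) => [->|ns].
  by exists a => [|z]; rewrite ?mem_head // inE => /eqP->.
have [M Ms HM] := IH ns.
case: (leqP a M) => aM.
  by exists M => [|z]; rewrite inE ?Ms ?orbT // => /orP[/eqP->|/HM].
exists a => [|z]; rewrite ?mem_head // inE => /orP[/eqP->//|/HM zM].
exact: leq_trans zM (ltnW aM).
Qed.
Lemma sum_const_seq (s : seq nat) c : \sum_(x <- s) c = size s * c.
Proof. by elim: s => [|x s IH]; rewrite ?big_nil ?big_cons ?IH. Qed.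

Fixpoint T (k : nat) : nat :=
  if k is k1.+1 then (if k1 is k'.+1 then 2 * T k1 + k' * T k' else 1) else 1.

Lemma cnt_cons s : 0 < size s -> uniq s ->
  count validL (permutations s) =
  \sum_(x <- s) count (fun t => validL (x :: t)) (permutations (rem x s)).
Proof.
move=> Hs Us; rewrite (seq.permP (permutationsE Hs)) (undup_id Us).
exact: count_ap.
Qed.

Lemma perm_rem_cons (s t : seq nat) x : x \in s -> t \in permutations (rem x s) ->
  perm_eq (x :: t) s.
Proof.
move=> xs; rewrite mem_permutations => Pt.
by rewrite perm_sym (permPl (perm_to_rem xs)) perm_cons perm_sym.
Qed.

Lemma cntL k : (forall s, uniq s -> size s = k -> count validL (permutations s) = T k) /\
  (forall s, uniq s -> size s = k.+1 -> count validL (permutations s) = T k.+1).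
Proof.
elim: k => [|k [IH0 IH1]].
  split; first by case.
  case=> [|a [|b s]] // Us _.
split; first exact: IH1.
move=> s Us Ss.
rewrite cnt_cons ?Ss //.
have [M Ms HM] : exists2 M, M \in s & forall z, z \in s -> z <= M.
  by apply: exmax; case: s Ss {Us}.
have Sr : size (rem M s) = k.+1 by rewrite size_rem // Ss.
have Ur : uniq (rem M s) := rem_uniq M Us.
have [M2 M2r HM2] : exists2 M2, M2 \in rem M s & forall z, z \in rem M s -> z <= M2.
  by apply: exmax; case: (rem M s) Sr.
have memr : forall x z, x \in s -> (z \in rem x s) = (z != x) && (z \in s).
  by move=> x z _; rewrite (mem_rem_uniq x Us) inE.
have M2s : M2 \in s by move: M2r; rewrite memr // => /andP[].
have M2M : M2 != M by move: M2r; rewrite memr // => /andP[].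
have M2ltM : M2 < M by rewrite ltn_neqAle M2M HM.
have bigM2 : forall z, z \in s -> M2 < z -> z = M.
  move=> z zs; apply: contraTeq => zM; by rewrite -leqNgt HM2 // memr // zM zs.
rewrite (big_rem M Ms) (big_rem M2 M2r) /=.
have gM : count (fun t => validL (M :: t)) (permutations (rem M s)) = T k.+1.
  rewrite -(IH1 _ Ur Sr); apply: eq_in_count => t tP; apply: L1 => y z yt zt My.
  have := perm_rem_cons Ms tP => /perm_mem Pm.
  have : y \in s by rewrite -Pm inE yt orbT.
  by move/HM; rewrite leqNgt My.
have gM2 : count (fun t => validL (M2 :: t)) (permutations (rem M2 s)) = T k.+1.
  have Ur2 : uniq (rem M2 s) := rem_uniq M2 Us.
  have Sr2 : size (rem M2 s) = k.+1 by rewrite size_rem // Ss.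
  rewrite -(IH1 _ Ur2 Sr2); apply: eq_in_count => t tP; apply: L1 => y z yt zt My Mz.
  have := perm_rem_cons M2s tP => /perm_mem Pm.
  have ys : y \in s by rewrite -Pm inE yt orbT.
  have zs : z \in s by rewrite -Pm inE zt orbT.
  by rewrite (bigM2 y ys My) (bigM2 z zs Mz).
rewrite gM gM2.
have grest : forall x, x \in rem M2 (rem M s) ->
    count (fun t => validL (x :: t)) (permutations (rem x s)) = T k.
  move=> x xr.
  have xs : x \in s.
    by move: xr => /mem_rem /mem_rem.
  have xM : x != M by move: xr => /mem_rem; rewrite memr // => /andP[].
  have xM2 : x != M2 by move: xr; rewrite (mem_rem_uniq _ Ur) inE => /andP[].
  have xltM2 : x < M2 by rewrite ltn_neqAle xM2 HM2 // (mem_rem xr).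
  set r := rem x s.
  have Urx : uniq r := rem_uniq x Us.
  have Srx : size r = k.+1 by rewrite size_rem // Ss.
  have Mr : M \in r by rewrite memr // eq_sym xM.
  rewrite (seq.permP (permutationsE _)) ?Srx // (undup_id Urx) count_ap.
  have -> : \sum_(y <- r) count (fun t => validL [:: x, y & t]) (permutations (rem y r))
         = \sum_(y <- r) (if y == M then count validL (permutations (rem y r)) else 0).
    apply: eq_big_seq => y yr.
    case: ifP => yM.
      apply: eq_in_count => t tP.
      have Pyt := perm_rem_cons yr tP.
      have Pxyt : perm_eq [:: x, y & t] s.
        by rewrite perm_sym (permPl (perm_to_rem xs)) perm_cons perm_sym.
      rewrite (L2 (y := y) (t := t) (M := M) (M2 := M2)) ?(perm_uniq Pxyt) ?yM //.
      - by rewrite (perm_mem Pyt).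
      - by rewrite (perm_mem Pyt) memr // eq_sym xM2.
      - by move=> z zt; apply: HM; rewrite -(perm_mem Pxyt) inE zt orbT.
    apply/eqP; rewrite -leqn0 leqNgt -has_count; apply/hasPn => t tP; apply/negP.
    have Pyt := perm_rem_cons yr tP.
    have Pxyt : perm_eq [:: x, y & t] s.
      by rewrite perm_sym (permPl (perm_to_rem xs)) perm_cons perm_sym.
    rewrite (L2 (y := y) (t := t) (M := M) (M2 := M2)) ?(perm_uniq Pxyt) ?yM //.
    - by rewrite (perm_mem Pyt).
    - by rewrite (perm_mem Pyt) memr // eq_sym xM2.
    - by move=> z zt; apply: HM; rewrite -(perm_mem Pxyt) inE zt orbT.
  rewrite (big_rem M Mr) eqxx big1_seq ?addn0.
    transitivity (count validL (permutations (rem M r))); first exact: addn0.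
    apply: IH0; first exact: rem_uniq.
    by rewrite size_rem // Srx.
  move=> y /andP[_ yr]; rewrite ifN //.
  by move: yr; rewrite (mem_rem_uniq _ Urx) inE => /andP[].
rewrite (eq_big_seq (fun _ => T k) grest) sum_const_seq.
rewrite size_rem // Sr /=.
by rewrite addnA addnn -mul2n.
Qed.

Lemma c123P t : c123 t <-> exists a b, [/\ a.+1 < b, b < size t,
   nth 0 t a < nth 0 t a.+1 & nth 0 t a.+1 < nth 0 t b].
Proof.
elim: t => [|x w IH] /=.
  by split=> // -[a [b [_ ]]].
split.
  case/orP => [|/IH [a [b [H1 H2 H3 H4]]]]; last by exists a.+1, b.+1.
  case: w {IH} => [|w1 w'] //= /andP[xw1 /hasP[c cw' w1c]].
  exists 0, (index c w').+2; split => //=.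
    by rewrite !ltnS index_mem.
  by rewrite nth_index.
case=> [[|a] [b [H1 H2 H3 H4]]].
  case: w H2 H3 H4 {IH} => [|w1 w'] //=.
  case: b H1 => [|[|b]] // _ H2 H3 H4.
  apply/orP; left; rewrite H3 /=; apply/hasP; exists (nth 0 w' b) => //.
  by apply: mem_nth.
case: b H1 H2 H3 H4 => [|b] // H1 H2 H3 H4.
by apply/orP; right; apply/IH; exists a, b.
Qed.

Lemma c214P t : c214 t <-> exists a b, [/\ a.+2 < b, b < size t,
   nth 0 t a.+1 < nth 0 t a, nth 0 t a < nth 0 t b & nth 0 t b < nth 0 t a.+2].
Proof.
elim: t => [|x w IH] /=.
  by split=> // -[a [b [_ ]]].
split.
  case/orP => [|/IH [a [b [H1 H2 H3 H4 H5]]]]; last by exists a.+1, b.+1.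
  case: w {IH} => [|w1 [|w2 w'']] //= /andP[w1x /hasP[c cw /andP[xc cw2]]].
  by exists 0, (index c w'').+3; split => /=; rewrite ?nth_index ?ltnS ?index_mem.
case=> [[|a] [b [H1 H2 H3 H4 H5]]].
  case: w H2 H3 H4 H5 {IH} => [|w1 [|w2 w'']] //=.
  case: b H1 => [|[|[|b]]] // _ H2 H3 H4 H5.
  apply/orP; left; rewrite H3 /=; apply/hasP; exists (nth 0 w'' b) => //.
    by apply: mem_nth.
  by rewrite H4 H5.
case: b H1 H2 H3 H4 H5 => [|b] // H1 H2 H3 H4 H5.
by apply/orP; right; apply/IH; exists a, b.
Qed.

Definition seqp m (q : {perm 'I_m}) : seq nat := [seq val (q i) | i <- enum 'I_m].

Lemma size_seqp m (q : {perm 'I_m}) : size (seqp q) = m.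
Proof. by rewrite size_map size_enum_ord. Qed.

Lemma nth_seqp m (q : {perm 'I_m}) (i : 'I_m) : nth 0 (seqp q) i = val (q i).
Proof.
rewrite (nth_map i) ?size_enum_ord //; congr (val (q _)).
by apply: val_inj; rewrite /= nth_enum_ord.
Qed.

Lemma c123_perm m (q : {perm 'I_m}) : contains_12_3 q = c123 (seqp q).
Proof.
apply/idP/idP.
  case/existsP => a /existsP [a1 /existsP [b /and4P[/eqP E H1 H2 H3]]].
  apply/c123P; exists a, b; rewrite size_seqp -E !nth_seqp; split => //.
case/c123P => a [b [H1 H2 H3 H4]]; rewrite size_seqp in H2.
have Ha1 : a.+1 < m := ltn_trans H1 H2.
have Ha : a < m := ltnW Ha1.
apply/existsP; exists (Ordinal Ha); apply/existsP; exists (Ordinal Ha1).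
apply/existsP; exists (Ordinal H2).
have E1 : nth 0 (seqp q) a = val (q (Ordinal Ha)) := nth_seqp q (Ordinal Ha).
have E2 : nth 0 (seqp q) a.+1 = val (q (Ordinal Ha1)) := nth_seqp q (Ordinal Ha1).
have E3 : nth 0 (seqp q) b = val (q (Ordinal H2)) := nth_seqp q (Ordinal H2).
rewrite E1 E2 E3 in H3 H4.
by rewrite /= eqxx H1 H3 H4.
Qed.

Lemma c214_perm m (q : {perm 'I_m}) : contains_214_3 q = c214 (seqp q).
Proof.
apply/idP/idP.
  case/existsP => a /existsP [a1 /existsP [a2 /existsP [b
     /andP[/eqP E1 /and5P[/eqP E2 H1 H2 H3 H4]]]]].
  apply/c214P; exists a, b; rewrite size_seqp -E2 -E1 !nth_seqp; split => //.
case/c214P => a [b [H1 H2 H3 H4 H5]]; rewrite size_seqp in H2.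
have Ha2 : a.+2 < m := ltn_trans H1 H2.
have Ha1 : a.+1 < m := ltnW Ha2.
have Ha : a < m := ltnW Ha1.
have E1 : nth 0 (seqp q) a = val (q (Ordinal Ha)) := nth_seqp q (Ordinal Ha).
have E2 : nth 0 (seqp q) a.+1 = val (q (Ordinal Ha1)) := nth_seqp q (Ordinal Ha1).
have E4 : nth 0 (seqp q) a.+2 = val (q (Ordinal Ha2)) := nth_seqp q (Ordinal Ha2).
have E3 : nth 0 (seqp q) b = val (q (Ordinal H2)) := nth_seqp q (Ordinal H2).
rewrite E1 E2 E3 E4 in H3 H4 H5.
apply/existsP; exists (Ordinal Ha); apply/existsP; exists (Ordinal Ha1).
apply/existsP; exists (Ordinal Ha2); apply/existsP; exists (Ordinal H2).
by rewrite /= !eqxx H1 H3 H4 H5.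
Qed.

Lemma seqp_inj m : injective (@seqp m).
Proof.
move=> q1 q2 E; apply/permP => i; apply: val_inj.
by rewrite -!nth_seqp E.
Qed.

Lemma seqp_perm m (q : {perm 'I_m}) : perm_eq (seqp q) (iota 0 m).
Proof.
rewrite /seqp.
have E : [seq val (q i) | i <- enum 'I_m] = map val (map q (enum 'I_m)).
  by elim: (enum 'I_m) => //= ? ? ->.
rewrite E.
rewrite -val_enum_ord.
apply: perm_map; apply: uniq_perm.
- by rewrite map_inj_uniq ?enum_uniq //; apply: perm_inj.
- exact: enum_uniq.
move=> i; rewrite mem_enum inE; apply/mapP; exists (q^-1 i)%g; rewrite ?mem_enum //.
by rewrite permKV.
Qed.

Lemma seqp_surj n (t : seq nat) : perm_eq t (iota 0 n.+1) ->
  exists q : {perm 'I_n.+1}, seqp q = t.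
Proof.
move=> Pt.
have St : size t = n.+1 by rewrite (perm_size Pt) size_iota.
have Ut : uniq t by rewrite (perm_uniq Pt) iota_uniq.
have lt : forall i, i < n.+1 -> nth 0 t i < n.+1.
  move=> i Hi; have : nth 0 t i \in iota 0 n.+1 by rewrite -(perm_mem Pt) mem_nth // St.
  by rewrite mem_iota.
pose g := fun i : 'I_n.+1 => (inord (nth 0 t i) : 'I_n.+1).
have ginj : injective g.
  move=> i j /(congr1 (@nat_of_ord _)); rewrite /g !inordK ?lt // => E.
  by apply: val_inj; move/eqP: E; rewrite nth_uniq ?St // => /eqP.
exists (perm ginj).
rewrite /seqp -(mkseq_nth 0 t) St /mkseq -val_enum_ord -map_comp.
by apply: eq_map => i /=; rewrite permE /g inordK ?lt.
Qed.

Lemma card_S_avoid n : #|S_avoid_12_3_214_3 n.+1| = count validL (permutations (iota 0 n.+1)).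
Proof.
set S := S_avoid_12_3_214_3 n.+1.
rewrite -size_filter cardE.
rewrite -(size_map (@seqp n.+1)).
apply: perm_size; apply: uniq_perm.
- by rewrite map_inj_uniq ?enum_uniq //; apply: seqp_inj.
- by rewrite filter_uniq // permutations_uniq.
move=> t; rewrite mem_filter mem_permutations; apply/mapP/andP.
  case=> q; rewrite mem_enum inE => /andP[H1 H2] ->; split; last exact: seqp_perm.
  by rewrite /validL -c123_perm -c214_perm H1 H2.
case=> V Pt; have [q Eq] := seqp_surj Pt; exists q => //.
by rewrite mem_enum inE c123_perm c214_perm Eq; move: V; rewrite /validL.
Qed.

Definition col (b : bool) : 'I_2 := if b then @Ordinal 2 1 isT else @Ordinal 2 0 isT.

Lemma I2_cases (a : 'I_2) : a = col false \/ a = col true.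
Proof. by case: a => [[|[|?]] H] //; [left|right]; apply: val_inj. Qed.

Lemma col_inj : injective col. Proof. by case; case. Qed.

Definition ok_block n (c : {ffun 'I_n -> 'I_2}) (B : {set 'I_n}) : bool :=
  [forall i in B, forall j in B,
     ((i != j) ==> (c i != c j)) &&
     ~~ [&& (i < j)%N, val (c i) == 0%N & val (c j) == 1%N]].

Lemma avoidsE n (Pc : {set {set 'I_n}} * {ffun 'I_n -> 'I_2}) :
  avoids_11_12 Pc = [forall B in Pc.1, ok_block Pc.2 B].
Proof. by []. Qed.

Lemma ok_blockP n (c : {ffun 'I_n -> 'I_2}) (B : {set 'I_n}) :
  reflect (forall i j, i \in B -> j \in B ->
     ((i != j) ==> (c i != c j)) &&
     ~~ [&& (i < j)%N, val (c i) == 0%N & val (c j) == 1%N]) (ok_block c B).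
Proof.
apply: (iffP forallP) => H.
  by move=> i j iB jB; move: (H i); rewrite iB /= => /forallP /(_ j); rewrite jB.
by move=> i; apply/implyP => iB; apply/forallP => j; apply/implyP => jB; apply: H.
Qed.

Lemma ok_block3 n (c : {ffun 'I_n -> 'I_2}) (B : {set 'I_n}) x y z : ok_block c B ->
  x \in B -> y \in B -> z \in B -> x != y -> x != z -> y = z.
Proof.
move/ok_blockP => H xB yB zB xy xz.
apply/eqP; apply: contraT => yz.
have := H x y xB yB; rewrite xy /= => /andP[cxy _].
have := H x z xB zB; rewrite xz /= => /andP[cxz _].
have := H y z yB zB; rewrite yz /= => /andP[cyz _].
move: cxy cxz cyz.
by case: (I2_cases (c x)) => ->; case: (I2_cases (c y)) => ->; case: (I2_cases (c z)) => ->.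
Qed.

Lemma ok_block_col n (c : {ffun 'I_n -> 'I_2}) (B : {set 'I_n}) x y : ok_block c B ->
  x \in B -> y \in B -> x != y -> c x = col (x < y)%N.
Proof.
move/ok_blockP => H xB yB xy.
have := H x y xB yB; rewrite xy /= => /andP[cxy nxy].
have := H y x yB xB => /andP[_ nyx].
move: cxy nxy nyx.
case: (ltngtP x y) => [lt|lt|eq]; last by rewrite (ord_inj eq) eqxx in xy.
  by case: (I2_cases (c x)) => ->; case: (I2_cases (c y)) => ->.
by case: (I2_cases (c x)) => ->; case: (I2_cases (c y)) => ->.
Qed.

Lemma ok_block1 n (c : {ffun 'I_n -> 'I_2}) x : ok_block c [set x].
Proof.
apply/ok_blockP => i j; rewrite !inE => /eqP-> /eqP->.
by rewrite eqxx ltnn.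
Qed.

Lemma ok_block2 n (c : {ffun 'I_n -> 'I_2}) x y : x != y ->
  c x = col (x < y)%N -> c y = col (y < x)%N -> ok_block c [set x; y].
Proof.
move=> xy cx cy; apply/ok_blockP => i j; rewrite !inE.
case: (ltngtP x y) cx cy => [lt|lt|eq] cx cy; last by rewrite (ord_inj eq) eqxx in xy.
  by case/orP=> /eqP-> /orP[]/eqP->; rewrite ?eqxx ?cx ?cy ?lt ?(ltnNge y x) ?(ltnW lt) ?ltnn //= ?(eq_sym y) ?xy.
by case/orP=> /eqP-> /orP[]/eqP->; rewrite ?eqxx ?cx ?cy ?lt ?(ltnNge x y) ?(ltnW lt) ?ltnn //= ?(eq_sym y) ?xy.
Qed.

Definition AD n (D : {set 'I_n}) :=
  [set Pc : {set {set 'I_n}} * {ffun 'I_n -> 'I_2} |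
     [&& partition Pc.1 D, avoids_11_12 Pc & [forall i, (i \notin D) ==> (val (Pc.2 i) == 0%N)]]].

Lemma Pi_AD n : Pi_wr_C2_avoid n = AD [set: 'I_n].
Proof.
apply/setP => Pc; rewrite !inE /colored_partition.
case: (partition _ _) => //=; case: (avoids_11_12 _) => //=.
by apply/esym/forallP => i; rewrite inE.
Qed.

Lemma ADP n (D : {set 'I_n}) P c : reflect
  [/\ partition P D, forall B, B \in P -> ok_block c B & forall i, i \notin D -> c i = col false]
  ((P, c) \in AD D).
Proof.
rewrite inE /= avoidsE /=; apply: (iffP and3P) => [[H1 /forallP H2 /forallP H3]|[H1 H2 H3]].
  split=> // [B BP|i iD].
    by move: (H2 B); rewrite BP.
  by move: (H3 i); rewrite iD /= => /eqP E; apply: val_inj.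
split=> //.
  by apply/forallP => B; apply/implyP => /H2.
by apply/forallP => i; apply/implyP => /H3 ->.
Qed.

Lemma AD_remove n (D : {set 'I_n}) P c B (c' : {ffun 'I_n -> 'I_2}) :
  (P, c) \in AD D -> B \in P ->
  (forall i, i \notin B -> c' i = c i) -> (forall i, i \in B -> c' i = col false) ->
  (P :\ B, c') \in AD (D :\: B).
Proof.
move=> /ADP [pP okP outP] BP c'1 c'2.
have tiP := partition_trivIset pP.
have BD := partitionS pP BP.
apply/ADP; split.
- exact: partitionD1.
- move=> B'; rewrite !inE => /andP[B'B B'P].
  have dis : [disjoint B' & B] by move/trivIsetP: tiP; apply.
  have nB : forall i, i \in B' -> i \notin B.
    by move=> i iB'; rewrite (disjointFr dis iB').
  have := okP B' B'P => /ok_blockP H; apply/ok_blockP => i j iB jB.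
  by rewrite !c'1 ?nB //; apply: H.
- move=> i; rewrite inE negb_and negbK => /orP[iB|iD]; first exact: c'2.
  rewrite c'1 ?outP //; apply: contra iD; exact: (subsetP BD).
Qed.

Lemma AD_insert n (D : {set 'I_n}) P' c' B (c : {ffun 'I_n -> 'I_2}) :
  (P', c') \in AD (D :\: B) -> B \subset D -> B != set0 ->
  (forall i, i \notin B -> c i = c' i) -> ok_block c B ->
  (B |: P', c) \in AD D.
Proof.
move=> /ADP [pP okP outP] BD B0 cc okB.
apply/ADP; split.
- have -> : D = B :|: (D :\: B).
    apply/setP => i; rewrite !inE; case: (boolP (i \in B)) => //= iB.
    by rewrite (subsetP BD).
  apply: partitionU1 => //.
  rewrite -setI_eq0; apply/eqP/setP => i; rewrite !inE.
  by case: (i \in B); rewrite ?andbF.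
- move=> B'; rewrite !inE => /orP[/eqP->//|B'P].
  have B'D := partitionS pP B'P.
  have nB : forall i, i \in B' -> i \notin B.
    by move=> i /(subsetP B'D); rewrite inE => /andP[].
  have := okP B' B'P => /ok_blockP H; apply/ok_blockP => i j iB jB.
  by rewrite !cc ?nB //; apply: H.
- move=> i iD; have iB : i \notin B by apply: contra iD; exact: (subsetP BD).
  by rewrite cc // outP // inE negb_and iD orbT.
Qed.

Lemma card_bij (T U : finType) (A : {set T}) (B : {set U}) (f : T -> U) (g : U -> T) :
  {in A, forall a, f a \in B} -> {in B, forall b, g b \in A} ->
  {in A, cancel f g} -> {in B, cancel g f} -> #|A| = #|B|.
Proof.
move=> fAB gBA fK gK.
have -> : B = f @: A.
  apply/setP => b; apply/idP/imsetP => [Bb|[a Aa ->]]; last exact: fAB.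
  by exists (g b); [apply: gBA | rewrite gK].
rewrite card_in_imset // => a1 a2 H1 H2 E.
by rewrite -(fK a1 H1) E fK.
Qed.

Definition upd n (c : {ffun 'I_n -> 'I_2}) (x : 'I_n) (v : 'I_2) : {ffun 'I_n -> 'I_2} :=
  [ffun i => if i == x then v else c i].

Definition partner n (x : 'I_n) (a : {set {set 'I_n}} * {ffun 'I_n -> 'I_2}) : 'I_n :=
  odflt x [pick y in pblock a.1 x | y != x].

Lemma partner_block n (D : {set 'I_n}) P c x : (P, c) \in AD D -> x \in D ->
  [/\ pblock P x \in P, x \in pblock P x,
      partner x (P, c) = x -> pblock P x = [set x] &
      partner x (P, c) != x -> pblock P x = [set x; partner x (P, c)]].
Proof.
move=> /ADP [pP okP outP] xD.
have cx : x \in cover P by rewrite (cover_partition pP).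
have BP := pblock_mem cx.
have xB : x \in pblock P x by rewrite mem_pblock.
split => //; rewrite /partner /=; case: pickP => [y /andP[yB yx] | none] /=.
- by move=> E; rewrite E eqxx in yx.
- move=> _; apply/setP => z; rewrite !inE; apply/idP/idP => [zB|].
    by apply/negPn/negP => /eqP zx; move: (none z); rewrite zB /=; move/eqP: zx => ->.
  by move/eqP->.
- move=> _; apply/setP => z; rewrite !inE; apply/idP/idP => [zB|/orP[]/eqP->//].
  case: (eqVneq z x) => //= zx.
  by rewrite (ok_block3 (okP _ BP) xB yB zB) // eq_sym.
- by rewrite eqxx.
Qed.

Lemma partner1 n (P : {set {set 'I_n}}) c x : trivIset P -> [set x] \in P ->
  partner x (P, c) = x.
Proof.
move=> tiP BP; rewrite /partner /= (def_pblock tiP BP (set11 x)).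
by case: pickP => [y /andP[]|] //=; rewrite inE => /eqP->; rewrite eqxx.
Qed.

Lemma partner2 n (P : {set {set 'I_n}}) c x y : trivIset P -> [set x; y] \in P ->
  y != x -> partner x (P, c) = y.
Proof.
move=> tiP BP yx; rewrite /partner /= (def_pblock tiP BP (set21 x y)).
case: pickP => [z /andP[]|none] /=.
  by rewrite !inE => /orP[]/eqP-> //; rewrite eqxx.
by move: (none y); rewrite !inE eqxx orbT yx.
Qed.

Lemma notin_cover n (D : {set 'I_n}) P' c' B x : (P', c') \in AD (D :\: B) ->
  x \in B -> B \notin P'.
Proof.
move=> /ADP [pP _ _] xB; apply/negP => BP.
have := partitionS pP BP => /subsetP /(_ x xB); rewrite inE xB.
by [].
Qed.

Lemma C1 n (D : {set 'I_n}) x : x \in D ->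
  #|[set a in AD D | partner x a == x]| = 2 * #|AD (D :\ x)|.
Proof.
move=> xD.
rewrite mulnC; transitivity (#|AD (D :\ x)| * #|[set: 'I_2]|); last by rewrite cardsT card_ord.
rewrite -cardsX.
apply: (@card_bij _ _ _ _
   (fun a => ((a.1 :\ [set x], upd a.2 x (col false)), a.2 x))
   (fun b => ([set x] |: b.1.1, upd b.1.2 x b.2))).
- move=> [P c] /setIdP[aD /eqP px].
  have [BP _ B1 _] := partner_block aD xD; rewrite B1 // in BP.
  rewrite in_setX in_setT andbT /=; apply: (AD_remove aD BP) => i; rewrite !inE ffunE.
    by move/negbTE->.
  by move->.
- move=> [[P' c'] v]; rewrite in_setX in_setT andbT /= => bD.
  have [pP _ _] := ADP _ _ _ bD.
  have ins : ([set x] |: P', upd c' x v) \in AD D.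
    apply: (AD_insert bD); rewrite ?sub1set ?ok_block1 //.
      by apply/set0Pn; exists x; rewrite inE.
    by move=> i; rewrite inE ffunE => /negbTE->.
  apply/setIdP; split => //; apply/eqP; apply: partner1; last by rewrite !inE eqxx.
  by have [/partition_trivIset] := ADP _ _ _ ins.
- move=> [P c] /setIdP[aD /eqP px].
  have [BP _ B1 _] := partner_block aD xD; rewrite B1 // in BP.
  rewrite setD1K //; congr (_, _); apply/ffunP => i; rewrite !ffunE.
  by case: eqP => // ->.
- move=> [[P' c'] v]; rewrite in_setX in_setT andbT /= => bD.
  have [_ _ outP] := ADP _ _ _ bD.
  rewrite setU1K ?(notin_cover bD (set11 x)) //; rewrite ffunE eqxx.
  congr (_, _, _); apply/ffunP => i; rewrite !ffunE.
  case: eqP => // ->; rewrite outP //.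
  by rewrite !inE eqxx.
Qed.

Lemma C3 n (D : {set 'I_n}) x y : x \in D -> y \in D -> y != x ->
  #|[set a in AD D | partner x a == y]| = #|AD (D :\: [set x; y])|.
Proof.
move=> xD yD yx.
have xy : x != y by rewrite eq_sym.
apply: (@card_bij _ _ _ _
   (fun a => (a.1 :\ [set x; y], upd (upd a.2 x (col false)) y (col false)))
   (fun b => ([set x; y] |: b.1, upd (upd b.2 x (col (x < y)%N)) y (col (y < x)%N)))).
- move=> [P c] /setIdP[aD /eqP px].
  have [BP _ _ B2] := partner_block aD xD; rewrite B2 px // in BP.
  apply: (AD_remove aD BP) => i; rewrite !inE !ffunE.
    by rewrite negb_or => /andP[/negbTE-> /negbTE->].
  by case/orP => /eqP->; rewrite ?eqxx // (negbTE xy).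
- move=> [P' c'] /= bD.
  have ins : ([set x; y] |: P', upd (upd c' x (col (x < y)%N)) y (col (y < x)%N)) \in AD D.
    apply: (AD_insert bD).
    - by apply/subsetP => i; rewrite !inE => /orP[]/eqP->.
    - by apply/set0Pn; exists x; rewrite !inE eqxx.
    - by move=> i; rewrite !inE !ffunE negb_or => /andP[/negbTE-> /negbTE->].
    - by apply: ok_block2; rewrite // !ffunE ?eqxx // (negbTE xy).
  apply/setIdP; split => //; apply/eqP; apply: partner2 => //; last by rewrite !inE eqxx.
  by have [/partition_trivIset] := ADP _ _ _ ins.
- move=> [P c] /setIdP[aD /eqP px].
  have [BP xB _ B2] := partner_block aD xD; rewrite B2 px // in BP.
  have [_ okP _] := ADP _ _ _ aD.
  have yB : y \in [set x; y] by rewrite !inE eqxx orbT.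
  have xB' : x \in [set x; y] by rewrite !inE eqxx.
  have cx := ok_block_col (okP _ BP) xB' yB xy.
  have cy := ok_block_col (okP _ BP) yB xB' yx.
  rewrite setD1K //; congr (_, _); apply/ffunP => i; rewrite !ffunE.
  by case: eqP => [->|_]; [|case: eqP => // ->].
- move=> [P' c'] /= bD.
  have [_ _ outP] := ADP _ _ _ bD.
  rewrite setU1K ?(notin_cover bD (set21 x y)) //.
  congr (_, _); apply/ffunP => i; rewrite !ffunE.
  case: eqP => [->|_]; first by rewrite outP // !inE eqxx orbT.
  case: eqP => [->|_] //; by rewrite outP // !inE eqxx.
Qed.

Lemma AD_step n (D : {set 'I_n}) x : x \in D ->
  #|AD D| = 2 * #|AD (D :\ x)| + \sum_(y in D :\ x) #|AD (D :\: [set x; y])|.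
Proof.
move=> xD.
have E : #|AD D| = \sum_(y : 'I_n) #|[set a in AD D | partner x a == y]|.
  rewrite -sum1_card (partition_big (partner x) xpredT) //=.
  apply: eq_bigr => y _; rewrite -sum1_card; apply: eq_bigl => a.
  by rewrite inE.
rewrite E (bigD1 x) //= C1 //; congr (_ + _).
rewrite [RHS]big_mkcond [LHS]big_mkcond /=; apply: eq_bigr => y _.
rewrite !inE; case: (eqVneq y x) => //= yx.
case: (boolP (y \in D)) => yD; first exact: C3.
apply/eqP; rewrite cards_eq0; apply/eqP/setP => [[P c]]; rewrite [in RHS]inE.
apply/negbTE/negP => /setIdP[aD /eqP px].
have [BP _ _ B2] := partner_block aD xD; rewrite px in B2.
have [pP _ _] := ADP _ _ _ aD.
have := partitionS pP BP.
rewrite B2 // => /subsetP /(_ y); rewrite !inE eqxx orbT => /(_ isT).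
by rewrite (negbTE yD).
Qed.

Lemma AD0 n : #|AD (set0 : {set 'I_n})| = 1.
Proof.
have -> : AD (set0 : {set 'I_n}) = [set (set0, [ffun=> col false])].
  apply/setP => [[P c]]; rewrite inE; apply/idP/idP.
    case/ADP => pP _ outP; rewrite partition_set0 in pP.
    rewrite xpair_eqE (eqP pP) eqxx /=; apply/eqP/ffunP => i.
    by rewrite ffunE outP ?inE.
  rewrite xpair_eqE => /andP[/eqP-> /eqP->]; apply/ADP; split.
  - by rewrite partition_set0.
  - by move=> B; rewrite inE.
  - by move=> i _; rewrite ffunE.
by rewrite cards1.
Qed.

Lemma AD_card k : forall j, j <= k -> forall n (D : {set 'I_n}), #|D| = j -> #|AD D| = T j.+1.
Proof.
elim: k => [|k IH] j.
  by rewrite leqn0 => /eqP-> n D /eqP; rewrite cards_eq0 => /eqP->; rewrite AD0.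
rewrite leq_eqVlt => /orP[/eqP->|]; last by rewrite ltnS; apply: IH.
move=> n D HD.
have [x xD] : exists x, x \in D by apply/set0Pn; rewrite -card_gt0 HD.
have HDx : #|D :\ x| = k by move: HD; rewrite (cardsD1 x D) xD add1n => [[]].
rewrite (AD_step xD) (IH k (leqnn k) _ _ HDx).
have -> : \sum_(y in D :\ x) #|AD (D :\: [set x; y])| = \sum_(y in D :\ x) T k.
  apply: eq_bigr => y yDx.
  have [k0|kpos] := posnP k.
    by move: HDx => /eqP; rewrite k0 cards_eq0 => /eqP E; rewrite E inE in yDx.
  rewrite -(prednK kpos); apply: (IH k.-1 (leq_pred k)).
  have : #|D :\ x| = k := HDx.
  rewrite (cardsD1 y (D :\ x)) yDx add1n -{1}(prednK kpos) => [[]] <-.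
  by rewrite setDDl.
by rewrite sum_nat_const HDx.
Qed.

Theorem mainTheorem5 (n : nat) :
  #|Pi_wr_C2_avoid n| = #|S_avoid_12_3_214_3 n.+1|.
Proof.
rewrite Pi_AD (AD_card (leqnn n)) ?cardsT ?card_ord // card_S_avoid.
by rewrite (proj1 (cntL n.+1)) ?iota_uniq ?size_iota.
Qed.
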